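(* Let $G$ be a $2$-Engel group, i.e. $[x,y,y]=1$ for all $x,y\in G$. If the set $\{x\in G:x^3=1\}$ is $2$-large in $G$, then $G$ has exponent $3$.
   Context: $[x,y]=x^{-1}y^{-1}xy$ and $[x,y,z]=[[x,y],z]$. A subset $X\subseteq G$ is $2$-large in $G$ if $aX\cap bX\ne\emptyset$ for all $a,b\in G$. *)

(* Defs.v *)
Definition is_group {G : Type} (mul : G -> G -> G) (inv : G -> G) (one : G) : Prop :=
  (forall x y z, mul x (mul y z) = mul (mul x y) z) /\
  (forall x, mul one x = x) /\
  (forall x, mul x one = x) /\
  (forall x, mul (inv x) x = one) /\
  (forall x, mul x (inv x) = one).

Definition comm {G : Type} (mul : G -> G -> G) (inv : G -> G) (x y : G) : G :=
  mul (mul (mul (inv x) (inv y)) x) y.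

Definition comm3 {G : Type} (mul : G -> G -> G) (inv : G -> G) (x y z : G) : G :=
  comm mul inv (comm mul inv x y) z.

Definition two_engel {G : Type} (mul : G -> G -> G) (inv : G -> G) (one : G) : Prop :=
  forall x y, comm3 mul inv x y y = one.

Definition two_large {G : Type} (mul : G -> G -> G) (X : G -> Prop) : Prop :=
  forall a b, exists x y, X x /\ X y /\ mul a x = mul b y.

Definition cube {G : Type} (mul : G -> G -> G) (x : G) : G := mul (mul x x) x.

(* Main.v *)
Require Import Defs.


Lemma gA {G} {mul : G -> G -> G} {inv one} (H : is_group mul inv one) x y z :
  mul (mul x y) z = mul x (mul y z).
Proof. destruct H as [A _]. now rewrite A. Qed.
Lemma gL1 {G} {mul : G -> G -> G} {inv one} (H : is_group mul inv one) x : mul one x = x.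
Proof. apply H. Qed.
Lemma gR1 {G} {mul : G -> G -> G} {inv one} (H : is_group mul inv one) x : mul x one = x.
Proof. apply H. Qed.
Lemma gLI {G} {mul : G -> G -> G} {inv one} (H : is_group mul inv one) x : mul (inv x) x = one.
Proof. apply H. Qed.
Lemma gRI {G} {mul : G -> G -> G} {inv one} (H : is_group mul inv one) x : mul x (inv x) = one.
Proof. apply H. Qed.
Lemma gC1 {G} {mul : G -> G -> G} {inv one} (H : is_group mul inv one) x z :
  mul x (mul (inv x) z) = z.
Proof. now rewrite <- (gA H), (gRI H), (gL1 H). Qed.
Lemma gC2 {G} {mul : G -> G -> G} {inv one} (H : is_group mul inv one) x z :
  mul (inv x) (mul x z) = z.
Proof. now rewrite <- (gA H), (gLI H), (gL1 H). Qed.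
Lemma ginv_uniq {G} {mul : G -> G -> G} {inv one} (H : is_group mul inv one) x y :
  mul x y = one -> y = inv x.
Proof. intro E. rewrite <- (gC2 H x y), E. apply (gR1 H). Qed.
Lemma ginvM {G} {mul : G -> G -> G} {inv one} (H : is_group mul inv one) x y :
  inv (mul x y) = mul (inv y) (inv x).
Proof. symmetry. apply (ginv_uniq H). rewrite (gA H), (gC1 H). apply (gRI H). Qed.
Lemma ginvI {G} {mul : G -> G -> G} {inv one} (H : is_group mul inv one) x :
  inv (inv x) = x.
Proof. symmetry. apply (ginv_uniq H). apply (gLI H). Qed.
Lemma ginv1 {G} {mul : G -> G -> G} {inv one} (H : is_group mul inv one) :
  inv one = one.
Proof. symmetry. apply (ginv_uniq H). apply (gL1 H). Qed.

Ltac norm H := repeat progress rewrite ?(gA H), ?(gL1 H), ?(gR1 H), ?(gLI H), ?(gRI H),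
   ?(gC1 H), ?(gC2 H), ?(ginvM H), ?(ginvI H), ?(ginv1 H).
Ltac norm_in H h := repeat progress rewrite ?(gA H), ?(gL1 H), ?(gR1 H), ?(gLI H), ?(gRI H),
   ?(gC1 H), ?(gC2 H), ?(ginvM H), ?(ginvI H), ?(ginv1 H) in h.

Lemma gcancel {G} {mul : G -> G -> G} {inv one} (H : is_group mul inv one) x y z :
  mul x y = mul x z -> y = z.
Proof. intro E. rewrite <- (gC2 H x y), E. apply (gC2 H). Qed.

Lemma comm_one {G} {mul : G -> G -> G} {inv one} (H : is_group mul inv one) x y :
  comm mul inv x y = one -> mul x y = mul y x.
Proof.
  unfold comm. intro E. norm_in H E.
  rewrite <- (gR1 H (mul y x)), <- E. norm H. reflexivity.
Qed.

Lemma cube_mul {G} {mul : G -> G -> G} {inv one} (H : is_group mul inv one)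
  (Hengel : two_engel mul inv one) a b :
  cube mul a = one -> cube mul b = one -> cube mul (mul a b) = one.
Proof.
  unfold cube. intros Ha Hb. norm_in H Ha. norm_in H Hb.
  set (d := mul (inv b) (mul (inv a) (mul b a))).
  assert (F1 : forall z, mul b (mul a z) = mul a (mul b (mul d z))).
  { intro z. unfold d. norm H. reflexivity. }
  assert (F2 : forall z, mul d (mul a z) = mul a (mul d z)).
  { intro z. pose proof (comm_one H _ _ (Hengel b a)) as E. unfold comm in E.
    pose proof (f_equal (fun t => mul t z) E) as E2. cbv beta in E2.
    norm_in H E2. unfold d. norm H. exact E2. }
  assert (F3 : forall z, mul d (mul b z) = mul b (mul d z)).
  { intro z. pose proof (comm_one H _ _ (Hengel a b)) as E. unfold comm in E.
    assert (E3 : forall w, mul (inv b) (mul d w) = mul d (mul (inv b) w)).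
    { intro w. pose proof (f_equal (fun t => mul (inv t) w) E) as E2. cbv beta in E2.
      norm_in H E2. unfold d. norm H. exact E2. }
    transitivity (mul b (mul (inv b) (mul d (mul b z)))).
    { now rewrite (gC1 H). }
    rewrite E3, (gC2 H). reflexivity. }
  assert (Ha' : forall z, mul a (mul a (mul a z)) = z).
  { intro z. transitivity (mul (mul a (mul a a)) z). { norm H. reflexivity. }
    rewrite Ha. apply (gL1 H). }
  assert (Hb' : forall z, mul b (mul b (mul b z)) = z).
  { intro z. transitivity (mul (mul b (mul b b)) z). { norm H. reflexivity. }
    rewrite Hb. apply (gL1 H). }
  pose proof (F3 one) as F3'. rewrite !(gR1 H) in F3'.
  assert (Hd : mul d (mul d d) = one).
  { assert (Ebd : mul b d = mul (inv a) (mul b a)) by (unfold d; norm H; reflexivity).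
    assert (X : mul (mul b d) (mul (mul b d) (mul b d)) = one).
    { rewrite Ebd. norm H. rewrite Hb'. norm H. reflexivity. }
    rewrite <- X. norm H. repeat progress rewrite ?F3, ?F3'. rewrite Hb'. reflexivity. }
  norm H. rewrite !F1. repeat progress rewrite ?F2, ?F3, ?F1, ?F3'.
  rewrite Ha', Hb'. exact Hd.
Qed.

Theorem theorem4p4 (G : Type) (mul : G -> G -> G) (inv : G -> G) (one : G)
  (Hgrp : is_group mul inv one)
  (Hengel : two_engel mul inv one)
  (Hlarge : two_large mul (fun x => cube mul x = one)) :
  forall x : G, cube mul x = one.
Proof.
  intro g. destruct (Hlarge g one) as [x [y [Hx [Hy E]]]].
  rewrite (gL1 Hgrp) in E.
  assert (Eg : g = mul y (inv x)) by (rewrite <- E; norm Hgrp; reflexivity).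
  rewrite Eg. apply (cube_mul Hgrp Hengel); auto.
  transitivity (inv (cube mul x)).
  { unfold cube. norm Hgrp. reflexivity. }
  rewrite Hx. apply (ginv1 Hgrp).
Qed.
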